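(* For every elliptic curve $E$ over $\mathbb{F}_q$ and every integer $n\geq 1$, the quantity $q^n+1-a_{E/\mathbb{F}_q;n}$ is nonzero and $$a_{E/\mathbb{F}_q;n+1}=1-q^n+a_{E/\mathbb{F}_q}+\frac{(q^n-q)(q^n-1)}{q^n+1-a_{E/\mathbb{F}_q;n}}.$$ In particular $a_{E/\mathbb{F}_q;2}=1-q+a_{E/\mathbb{F}_q}$.
   Context: Let $E$ be an elliptic curve over the finite field $\mathbb{F}_q$, and $a_{E/\mathbb{F}_q}:=q+1-\#E(\mathbb{F}_q)$. For $m\geq 1$ put $\beta_{E/\mathbb{F}_q;m}(0):=\sum_{\mathcal V}\frac{1}{\#\mathrm{Aut}(\mathcal V)}$, where $\mathcal V$ runs over isomorphism classes of semi-stable vector bundles of rank $m$ and degree $0$ on $E$; set $\beta_{E/\mathbb{F}_q;0}(0):=1$, $\beta_{E/\mathbb{F}_q;-1}(0):=0$. Define $a_{E/\mathbb{F}_q;n}:=(q^n+1)-(q^n-1)\frac{\beta_{E/\mathbb{F}_q;n}(0)}{\beta_{E/\mathbb{F}_q;n-1}(0)}$. Known background fact (Weng–Zagier): for all $m\geq1$, $(q^m-1)\beta_{E/\mathbb{F}_q;m}(0)=(q^m+q^{m-1}-a_{E/\mathbb{F}_q})\beta_{E/\mathbb{F}_q;m-1}(0)-(q^{m-1}-q)\beta_{E/\mathbb{F}_q;m-2}(0)$. *)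

(* Defs.v *)
From mathcomp Require Import all_boot all_order all_algebra.
Set Implicit Arguments. Unset Strict Implicit. Unset Printing Implicit Defensive.
Import Order.TTheory GRing.Theory Num.Theory.
Local Open Scope ring_scope.

(* The semi-stable invariants beta_{E/F_q;m}(0) are modelled by a sequence
   beta : nat -> R, beta m = beta_{E/F_q;m}(0) for m >= 0.
   [beta_prev beta m] is beta_{E/F_q; m-1}(0), with the convention
   beta_{E/F_q;-1}(0) = 0. *)
Definition beta_prev (R : ringType) (beta : nat -> R) (m : nat) : R :=
  if m is m'.+1 then beta m' else 0.

Definition WZ_recursion (R : ringType) (q : nat) (a : int) (beta : nat -> R) :=
  forall m : nat, (0 < m)%N ->
    ((q ^ m)%:R - 1) * beta m =
      ((q ^ m)%:R + (q ^ m.-1)%:R - a%:~R) * beta m.-1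
      - ((q ^ m.-1)%:R - q%:R) * beta_prev beta m.-1.

Definition a_n (R : fieldType) (q : nat) (beta : nat -> R) (n : nat) : R :=
  ((q ^ n)%:R + 1) - ((q ^ n)%:R - 1) * (beta n / beta_prev beta n).

(* Main.v *)
Require Import Defs.
From mathcomp Require Import all_boot all_order all_algebra.
From mathcomp Require Import ring lra.
Import Order.TTheory GRing.Theory Num.Theory.
Local Open Scope ring_scope.

Lemma key (R : realFieldType) (q : nat) (a : int) (beta : nat -> R) :
  (1 < q)%N -> (forall m, 0 < beta m) -> WZ_recursion q a beta ->
  forall n', (q ^ n'.+1)%:R + 1 - a_n q beta n'.+1 != 0 /\
     a_n q beta n'.+2 =
       1 - (q ^ n'.+1)%:R + a%:~R
       + ((q ^ n'.+1)%:R - q%:R) * ((q ^ n'.+1)%:R - 1) / ((q ^ n'.+1)%:R + 1 - a_n q beta n'.+1).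
Proof.
move=> hq hb hwz n'.
have HQ : (1 < q ^ n'.+1)%N by have := ltn_exp2l 0 n'.+1 hq; rewrite expn0 => ->.
have HQ' : (1 : R) < (q ^ n'.+1)%:R by rewrite ltr1n.
have H := hwz n'.+2 isT.
rewrite /= in H.
rewrite expnS natrM in H *.
set Q := (q ^ n'.+1)%:R in H HQ' *.
have b0 := hb n'; have b1 := hb n'.+1.
have b0n : beta n' != 0 by rewrite gt_eqF.
have b1n : beta n'.+1 != 0 by rewrite gt_eqF.
have Qn : Q - 1 != 0 by rewrite subr_eq0 gt_eqF.
have E : (q%:R * Q + 1) - (q%:R * Q - 1) * (beta n'.+2 / beta n'.+1)
   = (q%:R * Q + 1) - ((q%:R * Q + Q - a%:~R) * beta n'.+1 - (Q - q%:R) * beta n') / beta n'.+1.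
  by rewrite mulrA H.
have D : Q + 1 - a_n q beta n'.+1 = (Q - 1) * beta n'.+1 / beta n'.
  by rewrite /a_n /= -/Q; field.
rewrite D; split.
  by rewrite !mulf_neq0 // invr_eq0.
rewrite /a_n /= expnS natrM -/Q E.
field; rewrite ?b0n ?b1n ?Qn //.
Qed.

Theorem mainTheorem2 (R : realFieldType) (q : nat) (a : int) (beta : nat -> R) :
  (1 < q)%N -> (exists p k, prime p /\ q = (p ^ k)%N) ->
  (* Hasse bound for a = q + 1 - #E(F_q) *)
  a ^+ 2 <= 4 * q%:Z ->
  beta 0%N = 1 ->
  (forall m, 0 < beta m) ->
  WZ_recursion q a beta ->
  (forall n : nat, (0 < n)%N ->
     (q ^ n)%:R + 1 - a_n q beta n != 0 /\
     a_n q beta n.+1 =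
       1 - (q ^ n)%:R + a%:~R
       + ((q ^ n)%:R - q%:R) * ((q ^ n)%:R - 1) / ((q ^ n)%:R + 1 - a_n q beta n))
  /\ a_n q beta 2 = 1 - q%:R + a%:~R.
Proof.
move=> hq _ _ _ hb hwz.
split; first by case=> // n' _; exact: (@key R q a beta).
have [_ ->] := @key R q a beta hq hb hwz 0.
by rewrite expn1 subrr !mul0r addr0.
Qed.
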